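(* Let $X,Y$ be finite sets, $\mu\in\mathcal P(X)$, $\nu\in\mathcal P(Y)$, $c\in\mathbb R_+^{X\times Y}$, $\varepsilon>0$. Let $\{X_i\}_{i=1}^R$, $\{Y_i\}_{i=1}^R$ be partitions of $X$ and $Y$ with $\mu(X_i)=\nu(Y_i)$ for all $i$, and $y_i\in Y_i$ for $i=1,\dots,R$. Let $(\alpha^\dagger,\beta^\dagger)$ be a maximizer of the dual entropic OT functional $J_\varepsilon$. Define $d\in\mathbb R^{R\times R}$ by $$d(i,j)=-\varepsilon\log\Big(\sum_{x\in X_i,\,y\in Y_j}\exp\Big(-\tfrac1\varepsilon\big[c(x,y)-\alpha^\dagger(x)-\beta^\dagger(y_i)-\beta^\dagger(y)+\beta^\dagger(y_j)\big]\Big)\mu(x)\nu(y)\Big),$$ and $\hat J:\mathbb R^R\to\mathbb R$, $\hat J(\hat\beta)=-\varepsilon\sum_{i,j=1}^R\exp\big(-\tfrac1\varepsilon[d(i,j)+\hat\beta(i)-\hat\beta(j)]\big)$. Then $\hat\beta^\dagger\in\mathbb R^R$, $\hat\beta^\dagger(i)=\beta^\dagger(y_i)$, is a maximizer of $\hat J$, and conversely every maximizer $\hat\beta^{\dagger\dagger}$ of $\hat J$ satisfies $\hat\beta^{\dagger\dagger}=\hat\beta^\dagger+b$ for some constant $b\in\mathbb R$.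
   Context: $J_\varepsilon(\alpha,\beta)=\langle\alpha,\mu\rangle+\langle\beta,\nu\rangle-\varepsilon\sum_{x,y}K(x,y)\big(\exp((\alpha(x)+\beta(y))/\varepsilon)-1\big)$ with $K(x,y)=\exp(-c(x,y)/\varepsilon)\mu(x)\nu(y)$. $\mu(A)=\sum_{x\in A}\mu(x)$. *)

(* Defs.v *)
From mathcomp Require Import all_boot all_order all_algebra.
From mathcomp Require Import all_classical all_reals.
From mathcomp Require Import sequences exp.
Set Implicit Arguments. Unset Strict Implicit. Unset Printing Implicit Defensive.
Import Order.TTheory GRing.Theory Num.Theory.
Local Open Scope ring_scope.

Section EOT.
Variables (R : realType) (X Y : finType).

Definition Kern (eps : R) (c : X -> Y -> R) (mu : X -> R) (nu : Y -> R)
  (x : X) (y : Y) : R := expR (- c x y / eps) * mu x * nu y.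

Definition Jeps (eps : R) (c : X -> Y -> R) (mu : X -> R) (nu : Y -> R)
  (alpha : X -> R) (beta : Y -> R) : R :=
  \sum_x alpha x * mu x + \sum_y beta y * nu y
  - eps * \sum_x \sum_y Kern eps c mu nu x y
                    * (expR ((alpha x + beta y) / eps) - 1).

Definition mass (T : finType) (m : T -> R) (A : pred T) : R :=
  \sum_(t | A t) m t.

(* reduced cost d(i,j); the partitions are given by the labelling maps
   pX : X -> 'I_Rn, pY : Y -> 'I_Rn, i.e. X_i = pX^-1(i), Y_j = pY^-1(j). *)
Definition dred (Rn : nat) (eps : R) (c : X -> Y -> R) (mu : X -> R)
  (nu : Y -> R) (pX : X -> 'I_Rn) (pY : Y -> 'I_Rn) (yr : 'I_Rn -> Y)
  (alpha : X -> R) (beta : Y -> R) (i j : 'I_Rn) : R :=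
  - eps * ln (\sum_(x | pX x == i) \sum_(y | pY y == j)
      expR (- (c x y - alpha x - beta (yr i) - beta y + beta (yr j)) / eps)
        * mu x * nu y).

Definition Jhat (Rn : nat) (eps : R) (d : 'I_Rn -> 'I_Rn -> R)
  (bh : 'I_Rn -> R) : R :=
  - eps * \sum_i \sum_j expR (- (d i j + bh i - bh j) / eps).

End EOT.

(* Main.v *)
Require Import Defs.
From mathcomp Require Import all_boot all_order all_algebra.
From mathcomp Require Import all_classical all_reals.
From mathcomp Require Import sequences exp.
From mathcomp Require Import ring lra.
Import Order.TTheory GRing.Theory Num.Theory.
Local Open Scope ring_scope.

Lemma scal_lem (R : realType) (m A : R) : 0 < m -> 0 <= A ->
  (forall s, s * m <= A * (expR s - 1)) -> A = m.
Proof.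
move=> hm hA H.
have hA0 : 0 < A.
  rewrite lt_neqAle hA andbT; apply/negP => /eqP hA0.
  have := H 1; rewrite -hA0 mul0r mul1r => h; lra.
have hpos : m / A \is Num.pos by rewrite posrE divr_gt0.
set s := ln (m / A).
have es : expR s = m / A by rewrite /s lnK.
have H1 := H s; rewrite es mulrBr mulrCA divff ?mulr1 ?mulr1 in H1; last by rewrite gt_eqF.
have [s0|sn0] := eqVneq s 0.
  move: es; rewrite s0 expR0 => /eqP; rewrite eq_sym -subr_eq0.
  have -> : m / A - 1 = (m - A) / A by field; rewrite gt_eqF.
  rewrite mulf_eq0 invr_eq0 (gt_eqF hA0) orbF subr_eq0 => /eqP ->. done.
have := expR_gt1Dx (x := - s); rewrite oppr_eq0 => /(_ sn0).
rewrite expRN es invf_div => h.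
have h2 : m * (1 - s) < m * (A / m) by rewrite ltr_pM2l.
rewrite mulrCA divff ?mulr1 in h2; last by rewrite gt_eqF.
lra.
Qed.

Definition Qd {R : realType} {X Y : finType} (eps : R) c (mu : X -> R) (nu : Y -> R)
  alpha beta x y := Kern eps c mu nu x y * expR ((alpha x + beta y) / eps).

Lemma Jeps_pert (R : realType) (X Y : finType) (eps : R) c (mu : X -> R) (nu : Y -> R)
  alpha beta g h :
  Jeps eps c mu nu (fun x => alpha x + g x) (fun y => beta y + h y)
  - Jeps eps c mu nu alpha beta =
  \sum_x g x * mu x + \sum_y h y * nu y
  - eps * \sum_x \sum_y Qd eps c mu nu alpha beta x y
      * (expR ((g x + h y) / eps) - 1).
Proof.
rewrite /Jeps /Qd.
have E1 : \sum_x (alpha x + g x) * mu x = \sum_x alpha x * mu x + \sum_x g x * mu x.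
  by rewrite -big_split; apply: eq_bigr => x _; rewrite mulrDl.
have E2 : \sum_y (beta y + h y) * nu y = \sum_y beta y * nu y + \sum_y h y * nu y.
  by rewrite -big_split; apply: eq_bigr => x _; rewrite mulrDl.
set S2 := (X in _ = _ - eps * X).
have E3 : \sum_x \sum_y Kern eps c mu nu x y *
           (expR ((alpha x + g x + (beta y + h y)) / eps) - 1) =
          \sum_x \sum_y Kern eps c mu nu x y * (expR ((alpha x + beta y) / eps) - 1) + S2.
  rewrite /S2 -big_split; apply: eq_bigr => x _; rewrite -big_split; apply: eq_bigr => y _ /=.
  rewrite addrACA mulrDl expRD; ring.
rewrite E1 E2 E3; ring.
Qed.

Theorem mainTheorem8 (R : realType) (X Y : finType)
  (mu : X -> R) (nu : Y -> R) (c : X -> Y -> R) (eps : R)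
  (Rn : nat) (pX : X -> 'I_Rn) (pY : Y -> 'I_Rn) (yr : 'I_Rn -> Y)
  (alpha : X -> R) (beta : Y -> R) :
  (forall x, 0 <= mu x) -> \sum_x mu x = 1 ->
  (forall y, 0 <= nu y) -> \sum_y nu y = 1 ->
  (forall x y, 0 <= c x y) ->
  0 < eps ->
  (forall i, mass mu (fun x => pX x == i) = mass nu (fun y => pY y == i)) ->
  (forall i, 0 < mass mu (fun x => pX x == i)) ->
  (forall i, pY (yr i) = i) ->
  (forall a b, Jeps eps c mu nu a b <= Jeps eps c mu nu alpha beta) ->
  let d := dred eps c mu nu pX pY yr alpha beta in
  let bh := fun i => beta (yr i) in
  (forall b, Jhat eps d b <= Jhat eps d bh) /\
  (forall b', (forall b, Jhat eps d b <= Jhat eps d b') ->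
     exists k : R, forall i, b' i = bh i + k).
Proof.
move=> hmu hmu1 hnu hnu1 hc heps hmass hpos hyr hmax d bh.
have hne : eps != 0 by rewrite gt_eqF.
set Q := Qd eps c mu nu alpha beta.
have Qge0 : forall x y, 0 <= Q x y.
  by move=> x y; rewrite /Q /Qd /Kern !mulr_ge0 // ?expR_ge0.
have row : forall i, \sum_(x | pX x == i) \sum_y Q x y = mass mu (fun x => pX x == i).
  move=> i; apply: scal_lem; first exact: hpos.
    by apply: sumr_ge0 => x _; apply: sumr_ge0.
  move=> s.
  pose g := fun x => if pX x == i then eps * s else 0.
  pose h := fun y : Y => (0 : R).
  have H := hmax (fun x => alpha x + g x) (fun y => beta y + h y).
  rewrite -subr_le0 Jeps_pert -/Q in H.
  have e1 : \sum_x g x * mu x = eps * s * mass mu (fun x => pX x == i).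
    rewrite /mass [X in _ = _ * X]big_mkcond /= mulr_sumr; apply: eq_bigr => x _; rewrite /g.
    by case: (pX x == i); rewrite ?mulr0 ?mul0r.
  have e2 : \sum_y h y * nu y = 0 by apply: big1 => y _; rewrite mul0r.
  have e3 : \sum_x \sum_y Q x y * (expR ((g x + h y) / eps) - 1)
      = (expR s - 1) * \sum_(x | pX x == i) \sum_y Q x y.
    rewrite [X in _ = _ * X]big_mkcond mulr_sumr; apply: eq_bigr => x _; rewrite /g /h.
    case: (pX x == i) => /=.
      rewrite mulr_sumr; apply: eq_bigr => y _.
      have -> : (eps * s + 0) / eps = s by field.
      by rewrite mulrC.
    by rewrite mulr0; apply: big1 => y _; rewrite addr0 mul0r expR0 subrr mulr0.
  rewrite e1 e2 e3 in H.
  rewrite -(ler_pM2l heps); nra.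
have col : forall j, \sum_x \sum_(y | pY y == j) Q x y = mass nu (fun y => pY y == j).
  move=> j; apply: scal_lem; first by rewrite -hmass.
    by apply: sumr_ge0 => x _; apply: sumr_ge0.
  move=> s.
  pose h := fun y => if pY y == j then eps * s else 0.
  pose g := fun x : X => (0 : R).
  have H := hmax (fun x => alpha x + g x) (fun y => beta y + h y).
  rewrite -subr_le0 Jeps_pert -/Q in H.
  have e1 : \sum_y h y * nu y = eps * s * mass nu (fun y => pY y == j).
    rewrite /mass [X in _ = _ * X]big_mkcond /= mulr_sumr; apply: eq_bigr => x _; rewrite /h.
    by case: (pY x == j); rewrite ?mulr0 ?mul0r.
  have e2 : \sum_x g x * mu x = 0 by apply: big1 => y _; rewrite mul0r.
  have e3 : \sum_x \sum_y Q x y * (expR ((g x + h y) / eps) - 1)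
      = (expR s - 1) * \sum_x \sum_(y | pY y == j) Q x y.
    rewrite mulr_sumr; apply: eq_bigr => x _.
    rewrite [X in _ = _ * X]big_mkcond mulr_sumr; apply: eq_bigr => y _; rewrite /g /h.
    case: (pY y == j) => /=.
      have -> : (0 + eps * s) / eps = s by field.
      by rewrite mulrC.
    by rewrite addr0 mul0r expR0 subrr !mulr0.
  rewrite e1 e2 e3 in H.
  rewrite -(ler_pM2l heps); nra.
pose M := fun i j => \sum_(x | pX x == i) \sum_(y | pY y == j) Q x y.
have rowM : forall i, \sum_j M i j = mass mu (fun x => pX x == i).
  move=> i; rewrite -row /M exchange_big /=; apply: eq_bigr => x _.
  by rewrite [RHS](partition_big pY xpredT).
have colM : forall j, \sum_i M i j = mass nu (fun y => pY y == j).
  by move=> j; rewrite -col [RHS](partition_big pX xpredT).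
have Mpos : forall i j, 0 < M i j.
  move=> i j.
  have [x0 /andP[hx0 mx0]] := psumr_neq0P (fun x _ => hmu x) (elimN eqP (lt0r_neq0 (hpos i))).
  have hnj : 0 < mass nu (fun y => pY y == j) by rewrite -hmass.
  have [y0 /andP[hy0 ny0]] := psumr_neq0P (fun y _ => hnu y) (elimN eqP (lt0r_neq0 hnj)).
  have q0 : 0 < Q x0 y0 by rewrite /Q /Qd /Kern !mulr_gt0 ?expR_gt0.
  have h1 : 0 < \sum_(y | pY y == j) Q x0 y.
    rewrite (bigD1 y0) //=.
    have : 0 <= \sum_(y | (pY y == j) && (y != y0)) Q x0 y by apply: sumr_ge0.
    lra.
  rewrite /M (bigD1 x0) //=.
  have : 0 <= \sum_(x | (pX x == i) && (x != x0)) \sum_(y | pY y == j) Q x y.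
    by apply: sumr_ge0 => x _; apply: sumr_ge0.
  lra.
pose gam := fun (b : 'I_Rn -> R) i => (beta (yr i) - b i) / eps.
have JhatE : forall b, Jhat eps d b =
    - eps * \sum_i \sum_j M i j * expR (gam b i - gam b j).
  move=> b; rewrite /Jhat; congr (_ * _); apply: eq_bigr => i _; apply: eq_bigr => j _.
  rewrite /d /dred.
  have hS : \sum_(x | pX x == i) \sum_(y | pY y == j)
      expR (- (c x y - alpha x - beta (yr i) - beta y + beta (yr j)) / eps) * mu x * nu y
      = expR ((beta (yr i) - beta (yr j)) / eps) * M i j.
    rewrite /M mulr_sumr; apply: eq_bigr => x _; rewrite mulr_sumr; apply: eq_bigr => y _.
    rewrite /Q /Qd /Kern.
    have -> : - (c x y - alpha x - beta (yr i) - beta y + beta (yr j)) / eps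
       = (beta (yr i) - beta (yr j)) / eps + (- c x y / eps) + (alpha x + beta y) / eps by field.
    rewrite !expRD; ring.
  rewrite hS.
  have hp : expR ((beta (yr i) - beta (yr j)) / eps) * M i j \is Num.pos.
    by rewrite posrE mulr_gt0 ?expR_gt0.
  set L := ln _.
  have -> : - (- eps * L + b i - b j) / eps = L + (- (b i - b j) / eps) by field.
  rewrite expRD /L lnK // /gam.
  have -> : (beta (yr i) - b i) / eps - (beta (yr j) - b j) / eps
     = (beta (yr i) - beta (yr j)) / eps + (- (b i - b j) / eps) by field.
  rewrite expRD; ring.
have zero : forall b, \sum_i \sum_j M i j * (gam b i - gam b j) = 0.
  move=> b.
  have a1 : \sum_i \sum_j M i j * gam b i = \sum_i gam b i * mass mu (fun x => pX x == i).
    apply: eq_bigr => i _; rewrite -rowM mulr_sumr; apply: eq_bigr => j _; by rewrite mulrC.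
  have a2 : \sum_i \sum_j M i j * gam b j = \sum_j gam b j * mass mu (fun x => pX x == j).
    rewrite exchange_big; apply: eq_bigr => j _ /=; rewrite hmass -colM mulr_sumr.
    by apply: eq_bigr => i _; rewrite mulrC.
  have : \sum_i \sum_j M i j * (gam b i - gam b j)
     = \sum_i \sum_j M i j * gam b i - \sum_i \sum_j M i j * gam b j.
    rewrite -sumrB; apply: eq_bigr => i _; rewrite -sumrB; apply: eq_bigr => j _; ring.
  by rewrite a1 a2 subrr.
pose D := fun b => \sum_i \sum_j M i j * (expR (gam b i - gam b j) - 1 - (gam b i - gam b j)).
have Dge0 : forall b, 0 <= D b.
  move=> b; apply: sumr_ge0 => i _; apply: sumr_ge0 => j _.
  apply: mulr_ge0; first exact: ltW.
  have := expR_ge1Dx (gam b i - gam b j); lra.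
have FE : forall b, \sum_i \sum_j M i j * expR (gam b i - gam b j)
    = \sum_i \sum_j M i j + D b.
  move=> b; have := zero b.
  have : D b = \sum_i \sum_j M i j * expR (gam b i - gam b j)
     - \sum_i \sum_j M i j - \sum_i \sum_j M i j * (gam b i - gam b j).
    rewrite /D -!sumrB; apply: eq_bigr => i _; rewrite -!sumrB; apply: eq_bigr => j _; ring.
  lra.
have Dbh : D bh = 0.
  rewrite /D; apply: big1 => i _; apply: big1 => j _.
  by rewrite /gam /bh /= !(subrr, mul0r, expR0, mulr0, subr0).
split.
  move=> b; rewrite !JhatE !FE Dbh.
  have := Dge0 b; nra.
move=> b' hb'.
have := hb' bh; rewrite !JhatE !FE Dbh => h.
have hD : D b' = 0.
  apply/eqP; rewrite eq_le Dge0 andbT.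
  rewrite -(ler_pM2l heps); nra.
have tge0 : forall i j, 0 <= M i j * (expR (gam b' i - gam b' j) - 1 - (gam b' i - gam b' j)).
  move=> i j; apply: mulr_ge0; first exact: ltW.
  have := expR_ge1Dx (gam b' i - gam b' j); lra.
have hs : forall i j, gam b' i - gam b' j = 0.
  move=> i j.
  have h1 := psumr_eq0P (fun i _ => sumr_ge0 _ (fun j _ => tge0 i j)) hD (i := i) isT.
  have h2 := psumr_eq0P (fun j _ => tge0 i j) h1 (i := j) isT.
  apply/eqP; apply/negP => /negP hn.
  have := expR_gt1Dx hn.
  have := Mpos i j.
  move: h2; set z := gam b' i - gam b' j => h2 hM hz.
  have ez : expR z - 1 - z = expR z - (1 + z) by ring.
  have : 0 < M i j * (expR z - 1 - z) by apply: mulr_gt0 => //; rewrite ez subr_gt0.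
  by rewrite h2 ltxx.
exists (if [pick i0 : 'I_Rn] is Some i0 then b' i0 - bh i0 else 0).
move=> i; case: pickP => [i0 _|]; last by move=> /(_ i).
have := hs i i0; rewrite /gam /bh -mulrBl => /eqP.
rewrite mulf_eq0 invr_eq0 (negbTE hne) orbF => /eqP hh.
rewrite /bh.
have -> : b' i = beta (yr i) + (b' i0 - beta (yr i0))
   - (beta (yr i) - b' i - (beta (yr i0) - b' i0)) by ring.
by rewrite hh subr0.
Qed.
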